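(* Let $G$ be connected with weights $w:E\to\mathbb{R}_{>0}$, let $\pi$ be a vertex order and let $m_P$ be the perfect metric on $G_\pi^*$. Let $R$ be the set of edges $\{x,y\}$ of $G_\pi^*$, where $x$ denotes the lower-ranked endpoint, for which there exists a vertex $z\neq y$ of rank larger than the rank of $x$, adjacent to both $x$ and $y$ in $G_\pi^*$, with $m_P(\{x,y\})=m_P(\{x,z\})+m_P(\{z,y\})$. Then (i) for all $s,t\in V$ there is an up-down $s$–$t$ path in $G_\pi^*$ that uses no edge of $R$ and whose $m_P$-length equals $\mathrm{dist}_I(s,t)$; and (ii) for every edge $\{x,y\}\notin R$ of $G_\pi^*$, the one-edge path $x,y$ is the only up-down $x$–$y$ path in $G_\pi^*$ whose $m_P$-length equals $\mathrm{dist}_I(x,y)$.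
   Context: Let $G=(V,E)$ be a finite simple undirected graph with $n=|V|$ vertices. A vertex order is a bijection $\pi:\{1,\dots,n\}\to V$; the rank of $v$ is $\pi^{-1}(v)$. Contracting a vertex $v$ in a graph means deleting $v$ and its incident edges and adding an edge between every pair of former neighbors of $v$ that are not already adjacent. The core graph $G_{\pi,i}$ is obtained from $G$ by contracting $\pi(1),\dots,\pi(i-1)$ in this order. $G_\pi^*$ is the graph on $V$ whose edge set is the union of the edge sets of all $G_{\pi,i}$, $i=1,\dots,n$ (i.e. $G$ together with all edges inserted during the contractions). Let $w:E\to\mathbb{R}_{>0}$ and let $\mathrm{dist}_I(s,t)$ be the shortest $s$–$t$ path length in $(G,w)$. A metric is a map $m$ assigning to every edge of $G_\pi^*$ a value in $\mathbb{R}_{>0}\cup\{\infty\}$; the $m$-length of a path in $G_\pi^*$ is the sum of $m$ over its edges. An up-down path is a path $v_0,\dots,v_k$ in $G_\pi^*$ for which there is $j$ with the ranks strictly increasing along $v_0,\dots,v_j$ and strictly decreasing along $v_j,\dots,v_k$. The perfect metric is $m_P(\{x,y\})=\mathrm{dist}_I(x,y)$ for every edge $\{x,y\}$ of $G_\pi^*$. *)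

(* Defs.v *)
From HB Require Import structures.
From mathcomp Require Import all_boot all_order all_algebra.
Set Implicit Arguments. Unset Strict Implicit. Unset Printing Implicit Defensive.
Import Order.TTheory GRing.Theory Num.Theory.
Local Open Scope ring_scope.

Section Defs.
Variable T : finType.

Definition walk_len (R : numDomainType) (len : T -> T -> R) (s : T) (p : seq T) : R :=
  \sum_(xy <- zip (s :: p) p) len xy.1 xy.2.

Definition is_walk (e : rel T) (s t : T) (p : seq T) : bool :=
  path e s p && (last s p == t).

Fixpoint all_seqs (k : nat) : seq (seq T) :=
  if k is k'.+1 then [seq x :: q | x <- enum T, q <- all_seqs k'] else [:: [::]].

(* minimum of a list (0 for the empty list) *)
Definition min_list (R : realDomainType) (l : seq R) : R :=
  if l is x :: l' then foldr Num.min x l' else 0.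

(* Shortest-path distance dist_I(s,t) in (G,w): the minimum length of an
   s-t walk with fewer than #|T| edges (a shortest path is simple, hence
   among these walks; longer walks are never shorter since w > 0). *)
Definition dist_I (R : realDomainType) (e : rel T) (w : T -> T -> R) (s t : T) : R :=
  min_list [seq walk_len w s p |
             p <- [seq q <- flatten [seq all_seqs k | k <- iota 0 #|T|]
                  | is_walk e s t q]].

(* Core graphs: core_edge e rank i = edge relation of G_{pi,i+1}, i.e. G
   after contracting the vertices of rank 0, ..., i-1 (ranks 0-based). *)
Fixpoint core_edge (e : rel T) (rank : T -> 'I_#|T|) (i : nat) : rel T :=
  if i is i'.+1 then
    fun x y =>
      [&& (rank x != i' :> nat), (rank y != i' :> nat) &
        core_edge e rank i' x y ||
        [exists v, [&& (rank v == i' :> nat), core_edge e rank i' x v,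
                       core_edge e rank i' v y & x != y]]]
  else e.

Definition gstar (e : rel T) (rank : T -> 'I_#|T|) : rel T :=
  fun x y => [exists i : 'I_#|T|, core_edge e rank i x y].

Definition up_down (rank : T -> 'I_#|T|) (s : T) (p : seq T) : Prop :=
  exists j : nat,
    sorted ltn (take j.+1 (map (fun v => nat_of_ord (rank v)) (s :: p))) /\
    sorted (fun a b => b < a)%N (drop j (map (fun v => nat_of_ord (rank v)) (s :: p))).

Definition perfect_metric (R : realDomainType) (e : rel T) (w : T -> T -> R)
  (x y : T) : R := dist_I e w x y.

Definition R_cond (R : realDomainType) (e : rel T) (w : T -> T -> R)
  (rank : T -> 'I_#|T|) (x y : T) : Prop :=
  exists z : T, [/\ z != y, (rank x < rank z)%N, gstar e rank x z, gstar e rank z y &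
    perfect_metric e w x y = perfect_metric e w x z + perfect_metric e w z y].

Definition in_R (R : realDomainType) (e : rel T) (w : T -> T -> R)
  (rank : T -> 'I_#|T|) (x y : T) : Prop :=
  gstar e rank x y /\
  (((rank x < rank y)%N /\ R_cond e w rank x y) \/
   ((rank y < rank x)%N /\ R_cond e w rank y x)).

Definition avoids_R (R : realDomainType) (e : rel T) (w : T -> T -> R)
  (rank : T -> 'I_#|T|) (s : T) (p : seq T) : Prop :=
  forall xy, xy \in zip (s :: p) p -> ~ in_R e w rank xy.1 xy.2.

End Defs.

(* Main.v *)
Require Import Defs.
From HB Require Import structures.
From mathcomp Require Import all_boot all_order all_algebra.
From mathcomp Require Import zify ring lra.
From Stdlib Require Import Classical_Prop.
Set Implicit Arguments. Unset Strict Implicit. Unset Printing Implicit Defensive.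
Import Order.TTheory GRing.Theory Num.Theory.
Local Open Scope ring_scope.

Section Generic.
Variable T : finType.
Variable R : realFieldType.

Lemma wl_nil (len : T -> T -> R) s : walk_len len s [::] = 0.
Proof. by rewrite /walk_len /= big_nil. Qed.

Lemma wl_cons (len : T -> T -> R) s v p :
  walk_len len s (v :: p) = len s v + walk_len len v p.
Proof. by rewrite /walk_len /= big_cons. Qed.

Lemma wl_cat (len : T -> T -> R) s p1 p2 :
  walk_len len s (p1 ++ p2) = walk_len len s p1 + walk_len len (last s p1) p2.
Proof.
elim: p1 s => [|v p1 IH] s /=; first by rewrite wl_nil add0r.
by rewrite !wl_cons IH addrA.
Qed.

Lemma wl_ext (r : rel T) (l1 l2 : T -> T -> R) s p :
  path r s p -> (forall a b, r a b -> l1 a b = l2 a b) ->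
  walk_len l1 s p = walk_len l2 s p.
Proof.
move=> + H; elim: p s => [|v p IH] s /=; first by rewrite !wl_nil.
by case/andP=> rsv pp; rewrite !wl_cons (H _ _ rsv) (IH _ pp).
Qed.

Lemma wl_le (r : rel T) (l1 l2 : T -> T -> R) s p :
  path r s p -> (forall a b, r a b -> l1 a b <= l2 a b) ->
  walk_len l1 s p <= walk_len l2 s p.
Proof.
move=> + H; elim: p s => [|v p IH] s /=; first by rewrite !wl_nil.
by case/andP=> rsv pp; rewrite !wl_cons lerD // ?H // IH.
Qed.

Lemma wl_ge0 (r : rel T) (l : T -> T -> R) s p :
  path r s p -> (forall a b, r a b -> 0 <= l a b) -> 0 <= walk_len l s p.
Proof.
move=> + H; elim: p s => [|v p IH] s /=; first by rewrite !wl_nil.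
by case/andP=> rsv pp; rewrite !wl_cons addr_ge0 // ?H // IH.
Qed.

Lemma last_rev_belast (s : T) p : last (last s p) (rev (belast s p)) = s.
Proof.
elim: p s => [|v p IH] s //=.
by rewrite rev_cons last_rcons.
Qed.

Lemma wl_rev (len : T -> T -> R) s p :
  walk_len len (last s p) (rev (belast s p)) = walk_len (fun a b => len b a) s p.
Proof.
elim: p s => [|v p IH] s /=; first by rewrite !wl_nil.
rewrite rev_cons -cats1 wl_cat IH last_rev_belast wl_cons wl_cons wl_nil.
by rewrite addr0 addrC.
Qed.

Lemma min_list_le (l : seq R) x : x \in l -> min_list l <= x.
Proof.
case: l => [//|a l] /=.
elim: l => [|b l IH] /=; first by rewrite inE => /eqP->.
move=> xin; rewrite ge_min.
move: xin; rewrite inE in_cons => /orP[xa|/orP[/eqP->|xl]].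
- by rewrite IH ?orbT // inE xa.
- by rewrite lexx.
- by rewrite IH ?orbT // inE xl orbT.
Qed.

Lemma min_list_mem (l : seq R) : l != [::] -> min_list l \in l.
Proof.
case: l => [//|a l] _ /=.
elim: l => [|b l IH] /=; first by rewrite inE.
case: (leP b (foldr Num.min a l)) => h.
- by rewrite !inE eqxx orbT.
- move: IH; rewrite !inE => /orP[->//|->]; by rewrite !orbT.
Qed.

Lemma all_seqs_mem k (q : seq T) : size q = k -> q \in all_seqs T k.
Proof.
elim: k q => [|k IH] [|x q] //= [sq].
apply: (allpairs_f_dep (fun x q => x :: q)); first by rewrite mem_enum.
exact: IH.
Qed.

End Generic.

Lemma mem_split (X : eqType) (x : X) (l : seq X) :
  x \in l -> exists p1 p2, l = p1 ++ x :: p2.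
Proof. by case/splitPr => p1 p2; exists p1, p2. Qed.

Section Dist.
Variable T : finType.
Variable R : realFieldType.
Variable e : rel T.
Variable w : T -> T -> R.
Hypothesis e_sym : symmetric e.
Hypothesis e_irr : irreflexive e.
Hypothesis e_conn : forall s t : T, connect e s t.
Hypothesis w_sym : forall x y, e x y -> w x y = w y x.
Hypothesis w_pos : forall x y, e x y -> 0 < w x y.

Local Notation d := (dist_I e w).

Lemma wlw_ge0 s p : path e s p -> 0 <= walk_len w s p.
Proof. by move=> pp; apply: (wl_ge0 pp) => a b /w_pos/ltW. Qed.

Lemma uniq_size (l : seq T) : uniq l -> (size l <= #|T|)%N.
Proof. by move/card_uniqP <-; exact: max_card. Qed.

Lemma in_list s t q : path e s q -> last s q = t -> (size q < #|T|)%N ->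
  walk_len w s q \in [seq walk_len w s p |
             p <- [seq q <- flatten [seq all_seqs T k | k <- iota 0 #|T|]
                  | is_walk e s t q]].
Proof.
move=> pq lq sq; apply: map_f; rewrite mem_filter /is_walk pq lq eqxx /=.
apply/flattenP; exists (all_seqs T (size q)); last exact: all_seqs_mem.
by apply: map_f; rewrite mem_iota add0n.
Qed.

Lemma d_le_short s q : path e s q -> (size q < #|T|)%N ->
  d s (last s q) <= walk_len w s q.
Proof. by move=> pq sq; apply: min_list_le; exact: in_list. Qed.

Lemma shorten_walk s p : path e s p -> exists q,
  [/\ path e s q, last s q = last s p, uniq (s :: q) & walk_len w s q <= walk_len w s p].
Proof.
elim: p s => [|v p IH] s.
  by move=> _; exists [::]; split.
move=> /= /andP[esv pp].
have [q' [pq' lq' uq' leq']] := IH _ pp.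
have H1 : walk_len w s (v :: q') <= walk_len w s (v :: p) by rewrite !wl_cons lerD2l.
case: (boolP (s \in v :: q')) => sin.
  have [p1 [p2 E]] := mem_split sin.
  have pall : path e s (p1 ++ s :: p2) by rewrite -E /= esv.
  move: (pall); rewrite cat_path => /andP[pp1 /= /andP[el pp2]].
  exists p2; split => //.
  - by rewrite -lq' /= -[last v q']/(last s (v :: q')) E last_cat.
  - by move: uq'; rewrite E cat_uniq => /and3P[_ _].
  apply: le_trans H1; rewrite E wl_cat wl_cons.
  rewrite addrA lerDr addr_ge0 ?wlw_ge0 //; exact/ltW/w_pos.
exists (v :: q'); split => //=; first by rewrite esv.
by rewrite sin.
Qed.

Lemma d_le s p : path e s p -> d s (last s p) <= walk_len w s p.
Proof.
move=> pp; have [q [pq lq uq le]] := shorten_walk pp.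
rewrite -lq; apply: le_trans le; apply: d_le_short => //.
by have := uniq_size uq.
Qed.

Lemma d_attained s t : exists q, [/\ path e s q, last s q = t & walk_len w s q = d s t].
Proof.
rewrite /dist_I; set L := (X in min_list X).
have : L != [::].
  have /connectP [p pp lp] := e_conn s t.
  have [q [pq lq uq _]] := shorten_walk pp.
  have := in_list pq (esym (etrans lp (esym lq))) (uniq_size uq).
  by move=> H; apply/eqP => E; move: H; rewrite -/L E.
move=> /min_list_mem /mapP [q]; rewrite mem_filter => /andP[/andP[pq /eqP lq] _] eq.
by exists q; split.
Qed.

Lemma d_ge0 s t : 0 <= d s t.
Proof. by have [q [pq _ <-]] := d_attained s t; exact: wlw_ge0. Qed.

Lemma d_refl s : d s s = 0.
Proof.
apply/le_anti; rewrite d_ge0 andbT.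
by have := d_le (s := s) (p := [::]) isT; rewrite wl_nil.
Qed.

Lemma d_sym_le s t : d t s <= d s t.
Proof.
have [q [pq lq eq]] := d_attained s t.
have pr : path e (last s q) (rev (belast s q)).
  rewrite rev_path; apply: sub_path pq => a b; by rewrite e_sym.
have := d_le pr; rewrite last_rev_belast wl_rev lq => /le_trans; apply.
rewrite -eq le_eqVlt; apply/orP; left; apply/eqP; apply: (wl_ext pq) => a b /w_sym //.
Qed.

Lemma d_sym s t : d s t = d t s.
Proof. by apply/le_anti; rewrite !d_sym_le. Qed.

Lemma d_tri a b c : d a c <= d a b + d b c.
Proof.
have [q1 [p1 l1 e1]] := d_attained a b.
have [q2 [p2 l2 e2]] := d_attained b c.
have pq : path e a (q1 ++ q2) by rewrite cat_path p1 l1.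
have := d_le pq; rewrite last_cat l1 l2 wl_cat l1 e1 e2; exact.
Qed.

Lemma d_pos a b : a != b -> 0 < d a b.
Proof.
move=> ab; have [q [pq lq eq]] := d_attained a b.
case: q pq lq eq => [_ /= E|v q /= /andP[eav pq] _ <-]; first by rewrite E eqxx in ab.
by rewrite wl_cons ltr_pwDl ?w_pos // wlw_ge0.
Qed.

Lemma d_le_w a b : e a b -> d a b <= w a b.
Proof.
move=> eab; have := d_le (s := a) (p := [:: b]); rewrite /= eab wl_cons wl_nil addr0.
exact.
Qed.

End Dist.

Section Core.
Variable T : finType.
Variable e : rel T.
Variable rank : T -> 'I_#|T|.
Hypothesis e_sym : symmetric e.
Hypothesis e_irr : irreflexive e.

Local Notation ce := (core_edge e rank).
Local Notation g := (gstar e rank).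
Local Notation rk := (fun v => nat_of_ord (rank v)).

Lemma ce_sym i x y : ce i x y -> ce i y x.
Proof.
elim: i x y => [|i IH] x y /=; first by rewrite e_sym.
case/and3P=> rx ry /orP[h|/existsP[v /and4P[rv h1 h2 xy]]].
  apply/and3P; split => //; apply/orP; left; exact: IH.
apply/and3P; split => //; apply/orP; right; apply/existsP; exists v.
apply/and4P; split => //; [exact: IH|exact: IH|by rewrite eq_sym].
Qed.

Lemma ce_irr i x : ce i x x = false.
Proof.
elim: i => [|i IH] /=; first exact: e_irr.
rewrite IH /=; apply/negbTE; apply/and3P => -[_ _ /existsP[v /and4P[_ _ _]]].
by rewrite eqxx.
Qed.

Lemma ce_rank i x y : ce i x y -> (i <= rk x)%N.
Proof.
elim: i x y => [//|i IH] x y /=.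
case/and3P=> rx ry /orP[h|/existsP[v /and4P[rv h1 h2 xy]]].
  by have := IH _ _ h; rewrite leq_eqVlt eq_sym (negbTE rx).
by have := IH _ _ h1; rewrite leq_eqVlt eq_sym (negbTE rx).
Qed.

Lemma ce_lift i x y j : ce i x y -> (i + j <= rk x)%N -> (i + j <= rk y)%N -> ce (i + j) x y.
Proof.
elim: j => [|j IH]; first by rewrite addn0.
move=> h hx hy; rewrite addnS /=.
apply/and3P; split.
- by apply/eqP => E; move: hx; rewrite E addnS ltnn.
- by apply/eqP => E; move: hy; rewrite E addnS ltnn.
by rewrite IH // ltnW // -addnS.
Qed.

Lemma g_at x a : g x a -> (rk x < rk a)%N -> ce (rk x) x a.
Proof.
case/existsP=> i h lt.
have hi := ce_rank h.
have := @ce_lift i x a (rk x - i) h; rewrite subnKC //; apply => //.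
exact: ltnW.
Qed.

Lemma g_sym : symmetric g.
Proof.
move=> x y; apply/existsP/existsP => [][i h]; exists i; exact: ce_sym.
Qed.

Lemma g_irr x : g x x = false.
Proof. by apply/existsPn => i; rewrite ce_irr. Qed.

Lemma g_neq x y : g x y -> x != y.
Proof. by apply: contraTneq => ->; rewrite g_irr. Qed.

Lemma e_sub_g x y : e x y -> g x y.
Proof.
move=> h; apply/existsP.
have h0 : (0 < #|T|)%N by apply: leq_ltn_trans (ltn_ord (rank x)).
by exists (Ordinal h0).
Qed.

Lemma clique x a b : g x a -> g x b -> (rk x < rk a)%N -> (rk x < rk b)%N ->
  a != b -> g a b.
Proof.
move=> ga gb la lb ab.
have h1 := g_at ga la; have h2 := g_at gb lb.
have hlt : ((rk x).+1 < #|T|)%N by apply: leq_ltn_trans la (ltn_ord (rank a)).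
apply/existsP; exists (Ordinal hlt) => /=.
apply/and3P; split.
- by rewrite neq_ltn la orbT.
- by rewrite neq_ltn lb orbT.
apply/orP; right; apply/existsP; exists x.
apply/and4P; split => //; exact: ce_sym.
Qed.

End Core.

Section UD.
Variable T : Type.
Variable rk : T -> nat.

Definition relup (x y : T) := (rk x < rk y)%N.
Definition relgt (x y : T) := (rk y < rk x)%N.

Fixpoint udr (L : seq T) : bool :=
  if L is a :: L' then
    (if L' is b :: _ then (if (rk a < rk b)%N then udr L' else path relgt a L') else true)
  else true.

Lemma udrP L : (exists j, sorted relup (take j.+1 L) /\ sorted relgt (drop j L)) <-> udr L.
Proof.
elim: L => [|a L IH]; first by split => // _; exists 0.
case: L IH => [|b L] IH; first by split => // _; exists 0.
split.
- move=> [j [h1 h2]] /=.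
  case: ltnP => hab.
    apply/IH; case: j h1 h2 => [|j] h1 h2.
      by move: h2 => /= /andP[]; rewrite /relgt ltnNge ltnW.
    exists j; split; last by [].
    by move: h1 => /= /andP[].
  case: j h1 h2 => [|j] h1 h2; first by [].
  by move: h1 => /= /andP[]; rewrite /relup ltnNge hab.
- rewrite /=; case: ltnP => hab.
    move/IH => [j [h1 h2]]; exists j.+1; split; last by [].
    by rewrite /= {1}/relup hab.
  by move=> h; exists 0.
Qed.

Lemma sorted_take1 (r : rel T) L : sorted r (take 1 L).
Proof. by case: L => //= a L; rewrite take0. Qed.

Lemma udr_rev L : udr L -> udr (rev L).
Proof.
move/udrP => [j [h1 h2]]; apply/udrP.
case: (ltnP j (size L)) => hj.
  exists (size L - j.+1)%N; split.
    rewrite take_rev.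
    have -> : (size L - (size L - j.+1).+1 = j)%N by lia.
    by rewrite rev_sorted.
  rewrite drop_rev.
  have -> : (size L - (size L - j.+1) = j.+1)%N by lia.
  by rewrite rev_sorted.
exists 0; split; first exact: sorted_take1.
rewrite drop0 rev_sorted.
by move: h1; rewrite take_oversize // ltnW.
Qed.

Lemma udr_extract L1 a b L2 : udr (L1 ++ a :: b :: L2) -> (rk a < rk b)%N ->
  sorted relup (rcons L1 a) /\ udr (b :: L2).
Proof.
move=> + hab; elim: L1 => [|c L1 IH] /=; first by rewrite hab.
case: L1 IH => [|c' L1] IH /=.
  case: ltnP => hca.
    move=> h; have [_ h2] := IH h; split => //; by rewrite /= /relup hca.
  by move=> /and3P[_ + _]; rewrite /relgt ltnNge ltnW.
case: ltnP => hcc.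
  move=> h; have [h1 h2] := IH h; split => //; by rewrite /= {1}/relup hcc.
move=> /andP[_]; rewrite cat_path => /andP[_] /= /and3P[_ + _].
by rewrite /relgt ltnNge ltnW.
Qed.

Lemma udr_rebuild L1 a L3 : sorted relup (rcons L1 a) -> udr (a :: L3) -> udr (L1 ++ a :: L3).
Proof.
elim: L1 => [|c L1 IH] //= hs hu.
have IH' := IH (path_sorted hs) hu.
case: L1 hs IH IH' => [|c' L1] /= hs _ IH'.
  by move: hs => /andP[h _]; move: h; rewrite /relup => ->.
by move: hs => /andP[h _]; move: h; rewrite /relup => ->.
Qed.

Lemma localmin_aux M a b : (rk b < rk a)%N -> sorted (fun x y => rk x != rk y) (b :: M) ->
  ~~ path relgt b M ->
  exists L1 x y z L2, a :: b :: M = L1 ++ x :: y :: z :: L2 /\ (rk y < rk x)%N /\ (rk y < rk z)%N.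
Proof.
elim: M a b => [|c M IH] a b //= hba /andP[hbc hs].
rewrite {1}/relgt; case: ltnP => hcb /=.
  move=> hp; have [L1 [x [y [z [L2 [E [h1 h2]]]]]]] := IH b c hcb hs hp.
  by exists (a :: L1), x, y, z, L2; rewrite E.
move=> _; exists [::], a, b, c, M; split => //; split => //.
by rewrite ltn_neqAle hbc hcb.
Qed.

Lemma udr_localmin L : sorted (fun x y => rk x != rk y) L -> ~~ udr L ->
  exists L1 x y z L2, L = L1 ++ x :: y :: z :: L2 /\ (rk y < rk x)%N /\ (rk y < rk z)%N.
Proof.
elim: L => [|a L IH] //.
case: L IH => [|b L] IH //= /andP[hab hs].
case: ltnP => h.
  move=> hn; have [L1 [x [y [z [L2 [E [h1 h2]]]]]]] := IH hs hn.
  by exists (a :: L1), x, y, z, L2; rewrite E.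
have hba : (rk b < rk a)%N by rewrite ltn_neqAle eq_sym hab h.
rewrite negb_and {1}/relgt hba /= => hn.
exact: localmin_aux hba hs hn.
Qed.

Lemma path_gt_last a L : path relgt a L -> (rk (last a L) <= rk a)%N.
Proof.
elim: L a => [|b L IH] a //= /andP[h hp].
by apply: leq_trans (IH _ hp) (ltnW h).
Qed.

End UD.

Lemma zip_split (X : eqType) (x y : X) (L : seq X) :
  (x, y) \in zip L (behead L) -> exists L1 L2, L = L1 ++ x :: y :: L2.
Proof.
elim: L => [|a L IH] //; case: L IH => [|b L] IH //=.
rewrite in_cons => /orP[/eqP[-> ->]|h]; first by exists [::], L.
have [L1 [L2 E]] := IH h; exists (a :: L1), L2; by rewrite E.
Qed.

Lemma head_cat_cons (X : Type) (L1 M M' : seq X) x s p :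
  L1 ++ x :: M = s :: p -> exists p', L1 ++ x :: M' = s :: p'.
Proof.
case: L1 => [|c L1] /= [-> _]; first by exists M'.
by exists (L1 ++ x :: M').
Qed.

Lemma last_cat_cons (X : Type) (L1 M : seq X) x s :
  last s (L1 ++ x :: M) = last x M.
Proof. by rewrite last_cat. Qed.

Section Main.
Variable R : realFieldType.
Variable T : finType.
Variable e : rel T.
Variable w : T -> T -> R.
Variable rank : T -> 'I_#|T|.
Hypothesis e_sym : symmetric e.
Hypothesis e_irr : irreflexive e.
Hypothesis e_conn : forall s t : T, connect e s t.
Hypothesis w_sym : forall x y, e x y -> w x y = w y x.
Hypothesis w_pos : forall x y, e x y -> 0 < w x y.
Hypothesis rank_inj : injective rank.

Local Notation d := (dist_I e w).
Local Notation g := (gstar e rank).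
Definition rkf (v : T) : nat := nat_of_ord (rank v).
Local Notation ud := (udr rkf).

Let dtri := d_tri e_conn w_pos.
Let dsym := d_sym e_sym e_conn w_sym w_pos.
Let dge0 := d_ge0 e_conn w_pos.
Let gclique := clique (rank:=rank) e_sym.
Let gsym := g_sym rank e_sym.
Let gneq := g_neq (rank:=rank) e_irr.
Let girr := g_irr rank e_irr.
Let drefl := d_refl e_conn w_pos.
Let dpos := d_pos e_conn w_pos.

Lemma rk_inj a b : rkf a = rkf b -> a = b.
Proof. by move=> h; apply: rank_inj; apply: val_inj. Qed.

Lemma g_rk a b : g a b -> rkf a != rkf b.
Proof.
move=> h; apply/eqP => /rk_inj E; move: h; rewrite E.
by rewrite girr.
Qed.

Lemma rk_lt_neq a b : rkf a != rkf b -> (rkf a < rkf b)%N \/ (rkf b < rkf a)%N.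
Proof. by move=> h; case: ltngtP h => // *; [left|right]. Qed.

Fixpoint lenL (L : seq T) : R :=
  if L is x :: L' then (if L' is y :: _ then d x y + lenL L' else 0) else 0.

Lemma lenL_wl s p : lenL (s :: p) = walk_len d s p.
Proof.
elim: p s => [|v p IH] s /=; first by rewrite wl_nil.
by rewrite wl_cons -IH.
Qed.

Lemma lenL_cat L1 x M : lenL (L1 ++ x :: M) = lenL (rcons L1 x) + lenL (x :: M).
Proof.
elim: L1 => [|c L1 IH] /=; first by rewrite add0r.
case: L1 IH => [|c' L1] IH /=; first by rewrite addr0.
move: IH => /= ->; by rewrite addrA.
Qed.

Lemma lenL_ge0 L : 0 <= lenL L.
Proof.
elim: L => [|a L IH] //=; case: L IH => [|b L] IH //=.
by rewrite addr_ge0.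
Qed.

Lemma LB a L : d a (last a L) <= lenL (a :: L).
Proof.
elim: L a => [|b L IH] a /=; first by rewrite drefl.
apply: le_trans (dtri a b _) _; rewrite lerD2l; exact: IH.
Qed.

Lemma L_uniq a L : path g a L -> lenL (a :: L) = d a (last a L) -> uniq (a :: L).
Proof.
elim: L a => [|b L IH] a //= /andP[gab pb] E.
have hb : lenL (b :: L) = d b (last b L).
  apply/le_anti; rewrite LB andbT.
  rewrite -(lerD2l (d a b)); move: E => /= ->; exact: dtri.
have := IH b pb hb => /= ->; rewrite andbT.
apply/negP => ain.
have [p1 [p2 E2]] := mem_split ain.
have h1 : lenL (a :: p2) <= lenL (b :: L).
  rewrite E2 lenL_cat lerDr; exact: lenL_ge0.
have h2 : last b L = last a p2.
  by rewrite -[last b L]/(last a (b :: L)) E2 last_cat_cons.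
have := LB a p2; rewrite -h2 => h3.
have hab : 0 < d a b by apply: dpos; exact: gneq.
have E' : d a b + lenL (b :: L) = d a (last b L) := E.
lra.
Qed.

Definition OW s t L := [/\ L = s :: behead L, last s L = t, sorted g L & lenL L = d s t].

Lemma mkOW s t L : L = s :: behead L -> last s L = t -> sorted g L -> lenL L <= d s t -> OW s t L.
Proof.
move=> E lt sg le; split => //; apply/le_anti; rewrite le /=.
rewrite E; have := LB s (behead L); rewrite -lt E /=; exact.
Qed.

Lemma OW_uniq s t L : OW s t L -> uniq L.
Proof.
case=> E lt sg le; rewrite E; apply: L_uniq; first by move: sg; rewrite E.
by rewrite -E le -lt E.
Qed.

Definition f (L : seq T) : nat := \sum_(v <- L) 2 ^ rkf v.
Definition Fmax : nat := \sum_(v : T) 2 ^ rkf v.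

Lemma f_le L : uniq L -> (f L <= Fmax)%N.
Proof.
move=> u; rewrite /f big_uniq // /Fmax big_mkcond /= leq_sum // => i _.
by case: ifP.
Qed.

Lemma f_cat L1 L2 : f (L1 ++ L2) = (f L1 + f L2)%N.
Proof. by rewrite /f big_cat. Qed.

Lemma f_cons a L : f (a :: L) = (2 ^ rkf a + f L)%N.
Proof. by rewrite /f big_cons. Qed.

Lemma f_rev L : f (rev L) = f L.
Proof. by rewrite /f big_rev. Qed.

Lemma exp_lt a b : (a < b)%N -> (2 * 2 ^ a <= 2 ^ b)%N.
Proof. by move=> h; rewrite -expnS leq_pexp2l. Qed.

Lemma lemK z B y : path g y B -> ud (y :: B) -> g z y -> (rkf y < rkf z)%N -> z \notin y :: B ->
  exists B', [/\ path g z B', last z B' = last y B, ud (z :: B'),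
     lenL (z :: B') <= d z y + lenL (y :: B) & (f (y :: B) + 2 ^ rkf y <= f (z :: B'))%N].
Proof.
have dflt : forall y B, path g y B -> path (relgt rkf) y B -> g z y -> (rkf y < rkf z)%N ->
  exists B', [/\ path g z B', last z B' = last y B, ud (z :: B'),
     lenL (z :: B') <= d z y + lenL (y :: B) & (f (y :: B) + 2 ^ rkf y <= f (z :: B'))%N].
  move=> y' B' py hp gzy lyz; exists (y' :: B'); split => //=.
  - by rewrite gzy.
  - by rewrite ltnNge (ltnW lyz) /= {1}/relgt lyz.
  - have H := exp_lt lyz; rewrite !f_cons; clear -H; lia.
elim: B y => [|u B IH] y py hu gzy lyz zn; first by apply: dflt.
case: (ltnP (rkf y) (rkf u)) => hyu; last first.
  apply: dflt => //; move: hu => /=; by rewrite ltnNge hyu.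
move: py => /= /andP[gyu pu].
have hu' : ud (u :: B) by move: hu => /=; rewrite hyu.
have zu : z != u by apply: contra zn => /eqP ->; rewrite !inE eqxx orbT.
have gzu : g z u.
  have gyz : g y z by rewrite gsym.
  exact: (gclique gyz gyu lyz hyu zu).
have hexp := exp_lt hyu.
have htri : d z u <= d z y + d y u := dtri z y u.
case: (ltnP (rkf u) (rkf z)) => huz.
  have zn' : z \notin u :: B by apply: contra zn; rewrite !inE => ->; rewrite !orbT.
  have [B' [p1 l1 u1 len1 f1]] := IH u pu hu' gzu huz zn'.
  exists B'; split => //.
    apply: le_trans len1 _; rewrite /= addrA lerD2r; exact: htri.
  move: f1; rewrite !f_cons => f1; clear -f1 hexp; lia.
have hzu : (rkf z < rkf u)%N.
  by rewrite ltn_neqAle huz andbT; apply: contra zu => /eqP/rk_inj ->.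
exists (u :: B); split => //=.
- by rewrite gzu.
- by rewrite hzu.
- rewrite addrA lerD2r; exact: htri.
- have H := exp_lt lyz; rewrite !f_cons; clear -H; lia.
Qed.

Lemma notin_ins (L1 Y : seq T) (x z : T) : uniq (L1 ++ x :: z :: Y) -> z \notin L1 ++ x :: Y.
Proof.
rewrite cat_uniq => /and3P[_ h1 h2].
rewrite mem_cat negb_or; apply/andP; split.
  apply: contra h1 => zL1; apply/hasP; exists z => //; by rewrite !inE eqxx orbT.
move: h2 => /= /andP[hx /andP[hz _]].
rewrite inE negb_or hz andbT; apply: contra hx => /eqP ->; by rewrite inE eqxx.
Qed.

Lemma improve s t L L1 L2 x y z : OW s t L -> ud L -> L = L1 ++ x :: y :: L2 ->
  (rkf x < rkf y)%N -> z != y -> (rkf x < rkf z)%N -> g x z -> g z y ->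
  d x y = d x z + d z y -> exists L', [/\ OW s t L', ud L' & (f L < f L')%N].
Proof.
move=> OWL uL EL hxy zy hxz gxz gzy Edist.
have [Es lt sg le] := OWL.
have sg' := sg; rewrite EL sorted_cat_cons in sg'; case/andP: sg' => sg1 /= /andP[gxy py].
have hs : forall M, L1 ++ x :: M = s :: behead (L1 ++ x :: M).
  move=> M; have [p' ->] := head_cat_cons M (etrans (esym EL) Es); by [].
have lenLE : lenL L = lenL (rcons L1 x) + d x y + lenL (y :: L2).
  by rewrite EL lenL_cat /= addrA.
set L'' := L1 ++ x :: z :: y :: L2.
have OW'' : OW s t L''.
  apply: mkOW; first exact: hs.
  - by rewrite last_cat_cons -lt EL last_cat_cons.
  - by rewrite sorted_cat_cons sg1 /= gxz gzy py.
  by rewrite -le lenLE /L'' lenL_cat /= Edist !addrA.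
have zn : z \notin L by rewrite EL; apply: notin_ins; exact: (OW_uniq OW'').
have hL' : ud (L1 ++ x :: y :: L2) by rewrite -EL.
have [hs1 hud] := udr_extract hL' hxy.
case: (ltnP (rkf z) (rkf y)) => hzy.
  exists L''; split => //.
    apply: udr_rebuild => //=; by rewrite hxz hzy.
  rewrite EL /L'' !f_cat !f_cons; have H := expn_gt0 2 (rkf z); clear -H; lia.
have hyz : (rkf y < rkf z)%N.
  by rewrite ltn_neqAle hzy andbT; apply: contra zy => /eqP/rk_inj ->.
have zn' : z \notin y :: L2 by apply: contra zn => h; rewrite EL mem_cat inE h !orbT.
have [B' [p1 l1 u1 len1 f1]] := lemK py hud gzy hyz zn'.
exists (L1 ++ x :: z :: B'); split.
- apply: mkOW; first exact: hs.
  + by rewrite last_cat_cons -lt EL last_cat_cons /= l1.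
  + by rewrite sorted_cat_cons sg1 /= gxz.
  rewrite -le lenLE lenL_cat.
  have -> : lenL (x :: z :: B') = d x z + lenL (z :: B') by case: B' {p1 l1 u1 len1 f1}.
  rewrite -addrA lerD2l Edist -addrA lerD2l; exact: len1.
- apply: udr_rebuild => //=; by rewrite hxz.
- move: f1; rewrite EL !f_cat !f_cons => f1; have H := expn_gt0 2 (rkf y); clear -H f1; lia.
Qed.

Lemma rev_cons_last (s : T) p : rev (s :: p) = last s p :: rev (belast s p).
Proof. by rewrite lastI rev_rcons. Qed.

Lemma OW_rev s t L : OW s t L -> OW t s (rev L).
Proof.
case=> E lt sg le.
move: E lt sg le; set p := behead L => E lt sg le; rewrite E in lt sg le *.
have lt' : last s p = t := lt.
have sg' : path g s p := sg.
have le' : walk_len d s p = d s t by rewrite -lenL_wl.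
rewrite rev_cons_last lt'; split.
- by [].
- by rewrite /= -lt' last_rev_belast.
- rewrite /= -lt' rev_path; apply: sub_path sg' => a b; by rewrite gsym.
rewrite lenL_wl -{1}lt' wl_rev (dsym t s) -le'.
apply: (wl_ext (r := g) sg') => a b _; exact: dsym.
Qed.

Lemma ud_rev L : ud L -> ud (rev L).
Proof. exact: udr_rev. Qed.

Definition noR (L : seq T) := forall xy, xy \in zip L (behead L) -> ~ in_R e w rank xy.1 xy.2.

Lemma improve_any s t L : OW s t L -> ud L -> ~ noR L ->
  exists L', [/\ OW s t L', ud L' & (f L < f L')%N].
Proof.
move=> OWL uL nR.
have [[x y] [xyin inR]] : exists xy, xy \in zip L (behead L) /\ in_R e w rank xy.1 xy.2.
  apply: NNPP => H; apply: nR => xy h1 h2; apply: H; by exists xy.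
have [L1 [L2 EL]] := zip_split xyin.
case: inR => /= gxy [[hxy [z [zy hxz gxz gzy Ed]]]|[hyx [z [zx hyz gyz gzx Ed]]]].
  exact: (improve OWL uL EL hxy zy hxz gxz gzy Ed).
have OWr := OW_rev OWL.
have ELr : rev L = rev L2 ++ y :: x :: rev L1.
  by rewrite EL rev_cat !rev_cons -!cats1 -!catA.
have [L' [O' u' f']] := improve OWr (ud_rev uL) ELr hyx zx hyz gyz gzx Ed.
exists (rev L'); split.
- by have := OW_rev O'.
- exact: ud_rev.
- by rewrite f_rev -(f_rev L).
Qed.

Lemma step3 s t n L : (Fmax - f L <= n)%N -> OW s t L -> ud L ->
  exists L', [/\ OW s t L', ud L' & noR L'].
Proof.
elim: n L => [|n IH] L hn OWL uL.
  case: (classic (noR L)) => nR; first by exists L.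
  have [L' [O' u' f']] := improve_any OWL uL nR.
  have H := f_le (OW_uniq O'); exfalso; clear -H hn f'; lia.
case: (classic (noR L)) => nR; first by exists L.
have [L' [O' u' f']] := improve_any OWL uL nR.
have H := f_le (OW_uniq O').
apply: (IH L') => //; clear -H hn f'; lia.
Qed.

Lemma shortcut s t L : OW s t L -> ~~ ud L -> exists L', OW s t L' /\ (f L' < f L)%N.
Proof.
move=> OWL nu; have [Es lt sg le] := OWL.
have sn : sorted (fun a b => rkf a != rkf b) L.
  apply: sub_sorted sg => a b; exact: g_rk.
have [L1 [a [b [c [L2 [EL [hba hbc]]]]]]] := udr_localmin sn nu.
have uL := OW_uniq OWL.
have ac : a != c.
  move: uL; rewrite EL cat_uniq => /and3P[_ _] /= /andP[+ _].
  by rewrite !inE negb_or => /andP[_]; rewrite negb_or => /andP[].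
move: (sg); rewrite EL sorted_cat_cons => /andP[sg1] /= /and3P[gab gbc pc].
have gac : g a c.
  have gba : g b a by rewrite gsym.
  exact: (gclique gba gbc hba hbc ac).
exists (L1 ++ a :: c :: L2); split.
- apply: mkOW.
  + by have [p' ->] := head_cat_cons (c :: L2) (etrans (esym EL) Es).
  + by rewrite last_cat_cons -lt EL last_cat_cons.
  + by rewrite sorted_cat_cons sg1 /= gac.
  rewrite -le EL !lenL_cat /= lerD2l !addrA lerD2r; exact: dtri.
- rewrite !f_cat !f_cons; have H := expn_gt0 2 (rkf b); clear -H; lia.
Qed.

Lemma step2 s t n L : (f L <= n)%N -> OW s t L -> exists L', OW s t L' /\ ud L'.
Proof.
elim: n L => [|n IH] L hn OWL.
  case: (boolP (ud L)) => nu; first by exists L.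
  have [L' [O' f']] := shortcut OWL nu; exfalso; clear -hn f'; lia.
case: (boolP (ud L)) => nu; first by exists L.
have [L' [O' f']] := shortcut OWL nu.
apply: (IH L') => //; clear -hn f'; lia.
Qed.

Lemma step1 s t : exists L, OW s t L.
Proof.
have [q [pq lq eq]] := d_attained e_conn w_pos s t.
exists (s :: q); apply: mkOW => //.
- by rewrite /= (sub_path (@e_sub_g _ e rank) pq).
rewrite lenL_wl -eq; apply: (wl_le pq) => a b; exact: (d_le_w w_pos).
Qed.

Lemma up_down_ud s p : up_down rank s p <-> ud (s :: p).
Proof.
rewrite -udrP /up_down; split => -[j [h1 h2]]; exists j;
  move: h1 h2; rewrite -map_take -map_drop !sorted_map => h1 h2; by split.
Qed.

Lemma part2core a b L : OW a b L -> ud L -> (rkf a < rkf b)%N -> L != [:: a; b] -> g a b ->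
  R_cond e w rank a b.
Proof.
move=> OWL uL hab nL gab.
have uL' := OW_uniq OWL.
case: OWL => E lt sg le.
have [p Ep] : exists p, L = a :: p by exists (behead L).
rewrite Ep in lt sg le uL uL' nL; clear E Ep L.
case: p lt sg le uL uL' nL => [|v q] lt sg le uL uL' nL.
  have E : a = b := lt; by rewrite E ltnn in hab.
case: q lt sg le uL uL' nL => [|u q] lt sg le uL uL' nL.
  have E : v = b := lt; by rewrite E eqxx in nL.
have lt' : last u q = b := lt.
move: sg => /= /andP[gav pq].
have bin : b \in u :: q by rewrite -lt' mem_last.
have vb : v != b.
  apply: contraTneq bin => <-; by move: uL' => /= /and3P[_ + _].
have hav : (rkf a < rkf v)%N.
  case: (ltnP (rkf a) (rkf v)) => // h.
  move: uL => /=; rewrite ltnNge h /= => hp.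
  have hp' : path (relgt rkf) a [:: v, u & q] := hp.
  have := path_gt_last hp'; rewrite /= lt' => hba.
  by move: hab; rewrite ltnNge hba.
have gvb : g v b := gclique gav gab hav hab vb.
exists v; split => //.
rewrite /perfect_metric.
have h1 : d v b <= lenL (v :: u :: q) by rewrite -lt'; exact: (LB v (u :: q)).
have le' : d a v + lenL (v :: u :: q) = d a b := le.
have h2 := dtri a v b.
apply/eqP; rewrite eq_le; apply/andP; split; lra.
Qed.

Lemma main_sec :
  (forall s t : T, exists p : seq T,
     [/\ is_walk g s t p, up_down rank s p, avoids_R e w rank s p &
         walk_len (perfect_metric e w) s p = dist_I e w s t]) /\
  (forall x y : T, g x y -> ~ in_R e w rank x y ->
     forall p : seq T, is_walk g x y p -> up_down rank x p ->
       walk_len (perfect_metric e w) x p = dist_I e w x y -> p = [:: y]).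
Proof.
split.
- move=> s t.
  have [L0 O0] := step1 s t.
  have [L1 [O1 u1]] := step2 (leqnn _) O0.
  have [L2 [O2 u2 n2]] := step3 (leqnn _) O1 u1.
  case: O2 => E lt sg le.
  have [p Ep] : exists p, L2 = s :: p by exists (behead L2).
  rewrite Ep in lt sg le u2 n2; clear E Ep L2.
  have lt' : last s p = t := lt.
  have sg' : path g s p := sg.
  exists p; split.
  + by rewrite /is_walk sg' lt' eqxx.
  + by apply/up_down_ud.
  + move=> xy; exact: n2.
  + have : walk_len d s p = d s t by rewrite -lenL_wl.
    exact.
- move=> x y gxy nR p /andP[px /eqP lx] ud_p eqlen.
  case: (eqVneq p [:: y]) => // hp; exfalso; apply: nR.
  have OWL : OW x y (x :: p).
    split => //; rewrite lenL_wl; exact: eqlen.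
  have uL : ud (x :: p) by apply/up_down_ud.
  have nL : x :: p != [:: x; y] by apply: contra hp => /eqP [->].
  split => //.
  case: (rk_lt_neq (g_rk gxy)) => h.
    left; split => //; exact: part2core OWL uL h nL gxy.
  right; split => //; apply: (part2core (OW_rev OWL) (ud_rev uL) h).
    apply: contra nL => /eqP E; apply/eqP; by rewrite -(revK (x :: p)) E.
  by rewrite gsym.
Qed.

End Main.

Unset Implicit Arguments.

Theorem mainTheorem9 (R : realFieldType) (T : finType) (e : rel T) (w : T -> T -> R)
  (rank : T -> 'I_#|T|)
  (e_sym : symmetric e) (e_irr : irreflexive e)
  (e_conn : forall s t : T, connect e s t)
  (w_sym : forall x y, e x y -> w x y = w y x)
  (w_pos : forall x y, e x y -> 0 < w x y)
  (rank_inj : injective rank) :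
  (forall s t : T, exists p : seq T,
     [/\ is_walk (gstar e rank) s t p, up_down rank s p, avoids_R e w rank s p &
         walk_len (perfect_metric e w) s p = dist_I e w s t]) /\
  (forall x y : T, gstar e rank x y -> ~ in_R e w rank x y ->
     forall p : seq T, is_walk (gstar e rank) x y p -> up_down rank x p ->
       walk_len (perfect_metric e w) x p = dist_I e w x y -> p = [:: y]).
Proof.
exact: (main_sec e_sym e_irr e_conn w_sym w_pos rank_inj).
Qed.
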